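(* Let $\mathbf E$ be a topos with enough weakly contractible objects. Then $\mathbf E$ is transfinite.
   Context: An object $C$ of a topos $\mathbf E$ is weakly contractible if every epimorphism $D\to C$ in $\mathbf E$ splits, i.e. there is $C\to D$ whose composite with $D\to C$ is the identity. $\mathbf E$ has enough weakly contractible objects if for every object $C$ there is an epimorphism $D\to C$ with $D$ weakly contractible. For an ordinal $\lambda$, a $\lambda$-tower is a functor $(E_i)_{i<\lambda}:\lambda^{\rm op}\to\mathbf E$ such that for every limit ordinal $\mu<\lambda$ the natural map $E_\mu\to\lim_{i<\mu}E_i$ is an isomorphism. $\mathbf E$ is $\alpha$-transfinite ($\alpha$ an infinite cardinal) if for every ordinal $\lambda\le\alpha$ and every $\lambda$-tower with $E_{i+1}\to E_i$ an epimorphism for all $1\le i+1<\lambda$, the morphism $\lim_{i<\lambda}E_i\to E_0$ is an epimorphism; $\mathbf E$ is transfinite if it is $\alpha$-transfinite for all cardinals $\alpha$. *)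

(* Defs.v *)
Set Implicit Arguments.
Unset Strict Implicit.

Record Category := {
  Ob :> Type;
  Hom : Ob -> Ob -> Type;
  cid : forall X, Hom X X;
  comp : forall X Y Z, Hom Y Z -> Hom X Y -> Hom X Z;
  comp_id_l : forall X Y (f : Hom X Y), comp (cid Y) f = f;
  comp_id_r : forall X Y (f : Hom X Y), comp f (cid X) = f;
  comp_assoc : forall X Y Z W (h : Hom Z W) (g : Hom Y Z) (f : Hom X Y),
      comp h (comp g f) = comp (comp h g) f
}.

Arguments Hom {c} _ _.
Arguments cid {c} _.
Arguments comp {c X Y Z} _ _.
Notation "g \o f" := (comp g f) (at level 40, left associativity).

Section Cat.
Variable C : Category.

Definition epi {X Y : C} (f : Hom X Y) : Prop :=
  forall Z (u v : Hom Y Z), u \o f = v \o f -> u = v.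

Definition mono {X Y : C} (f : Hom X Y) : Prop :=
  forall Z (u v : Hom Z X), f \o u = f \o v -> u = v.

Definition is_terminal (T : C) : Prop :=
  forall X : C, exists t : Hom X T, forall t' : Hom X T, t' = t.

Definition is_pullback {X Y Z P : C} (f : Hom X Z) (g : Hom Y Z)
    (p1 : Hom P X) (p2 : Hom P Y) : Prop :=
  f \o p1 = g \o p2 /\
  forall Q (q1 : Hom Q X) (q2 : Hom Q Y), f \o q1 = g \o q2 ->
    exists m : Hom Q P, (p1 \o m = q1 /\ p2 \o m = q2) /\
      forall m' : Hom Q P, p1 \o m' = q1 -> p2 \o m' = q2 -> m' = m.

Definition has_terminal : Prop := exists T : C, is_terminal T.

Definition has_pullbacks : Prop :=
  forall X Y Z (f : Hom X Z) (g : Hom Y Z),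
    exists P (p1 : Hom P X) (p2 : Hom P Y), is_pullback f g p1 p2.

(** Local cartesian closedness, phrased via dependent products: for
    [f : I -> J], every object [a : A -> I] over [I] has a dependent
    product [b : B -> J] over [J] with an evaluation map
    [ev : f^*(B) -> A] over [I], universal among such data. *)
Definition locally_cartesian_closed : Prop :=
  forall I J (f : Hom I J) A (a : Hom A I),
    exists B (b : Hom B J) P (q1 : Hom P B) (q2 : Hom P I) (ev : Hom P A),
      is_pullback b f q1 q2 /\ a \o ev = q2 /\
      forall Cc (c : Hom Cc J) Q (s1 : Hom Q Cc) (s2 : Hom Q I) (h : Hom Q A),
        is_pullback c f s1 s2 -> a \o h = s2 ->
        exists k : Hom Cc B,
          (b \o k = c /\
           forall m : Hom Q P, q1 \o m = k \o s1 -> q2 \o m = s2 -> ev \o m = h) /\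
          forall k' : Hom Cc B, b \o k' = c ->
            (forall m : Hom Q P, q1 \o m = k' \o s1 -> q2 \o m = s2 -> ev \o m = h) ->
            k' = k.

Definition has_subobject_classifier : Prop :=
  exists (One Omega : C) (tru : Hom One Omega), is_terminal One /\
    forall A X (m : Hom A X), mono m ->
      exists chi : Hom X Omega,
        (exists t : Hom A One, is_pullback chi tru m t) /\
        forall chi' : Hom X Omega,
          (exists t : Hom A One, is_pullback chi' tru m t) -> chi' = chi.

Definition elementary_topos : Prop :=
  has_terminal /\ has_pullbacks /\ locally_cartesian_closed /\
  has_subobject_classifier.

Definition has_small_coproducts : Prop :=
  forall (I : Type) (X : I -> C),
    exists (S : C) (inj : forall i, Hom (X i) S),
      forall Z (g : forall i, Hom (X i) Z),
        exists u : Hom S Z, (forall i, u \o inj i = g i) /\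
          forall u' : Hom S Z, (forall i, u' \o inj i = g i) -> u' = u.

Definition has_generating_family : Prop :=
  exists (K : Type) (G : K -> C),
    forall X Y (f g : Hom X Y),
      (forall k (x : Hom (G k) X), f \o x = g \o x) -> f = g.

(** Grothendieck topos (Giraud's characterization): an elementary topos
    with all small coproducts and a small set of generators. *)
Definition topos : Prop :=
  elementary_topos /\ has_small_coproducts /\ has_generating_family.

Definition weakly_contractible (X : C) : Prop :=
  forall D (p : Hom D X), epi p -> exists s : Hom X D, p \o s = cid X.

Definition enough_weakly_contractible : Prop :=
  forall X : C, exists D (p : Hom D X), epi p /\ weakly_contractible D.
End Cat.

Record Ordinal := {
  oT :> Type;
  olt : oT -> oT -> Prop;
  olt_trans : forall x y z, olt x y -> olt y z -> olt x z;
  olt_irrefl : forall x, ~ olt x x;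
  olt_total : forall x y, olt x y \/ x = y \/ olt y x;
  olt_wf : well_founded olt
}.
Arguments olt {o} _ _.

Section Towers.
Variable C : Category.
Variable L : Ordinal.

Definition is_succ (i j : L) : Prop :=
  olt i j /\ forall k, olt i k -> olt k j -> False.

Definition is_least (i : L) : Prop := forall j : L, ~ olt j i.

Definition is_limit (m : L) : Prop :=
  ~ is_least m /\ forall i, ~ is_succ i m.

(** A functor [L^op -> C]. *)
Record diagram := {
  dob :> L -> C;
  dmap : forall i j : L, olt j i -> Hom (dob i) (dob j);
  dmap_comp : forall i j k (hij : olt j i) (hjk : olt k j) (hik : olt k i),
      dmap hjk \o dmap hij = dmap hik
}.

Definition is_limit_below (E : diagram) (m : L) (X : C)
    (p : forall i, olt i m -> Hom X (E i)) : Prop :=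
  (forall i j (hi : olt i m) (hj : olt j m) (hji : olt j i),
      dmap E hji \o p i hi = p j hj) /\
  forall Y (q : forall i, olt i m -> Hom Y (E i)),
    (forall i j (hi : olt i m) (hj : olt j m) (hji : olt j i),
        dmap E hji \o q i hi = q j hj) ->
    exists u : Hom Y X, (forall i hi, p i hi \o u = q i hi) /\
      forall u' : Hom Y X, (forall i hi, p i hi \o u' = q i hi) -> u' = u.

Definition is_limit_cone (E : diagram) (X : C) (p : forall i, Hom X (E i)) : Prop :=
  (forall i j (hji : olt j i), dmap E hji \o p i = p j) /\
  forall Y (q : forall i, Hom Y (E i)),
    (forall i j (hji : olt j i), dmap E hji \o q i = q j) ->
    exists u : Hom Y X, (forall i, p i \o u = q i) /\
      forall u' : Hom Y X, (forall i, p i \o u' = q i) -> u' = u.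

End Towers.
Arguments is_limit_below {C L} E m X p.
Arguments is_limit_cone {C L} E X p.

Definition is_tower {C : Category} {L : Ordinal} (E : diagram C L) : Prop :=
  forall m : L, is_limit m -> is_limit_below E m (E m) (fun i h => dmap E h).

Definition transfinite (C : Category) : Prop :=
  forall (L : Ordinal) (E : diagram C L), is_tower E ->
    (forall (i j : L) (h : olt i j), is_succ i j -> epi (dmap E h)) ->
    forall (X : C) (p : forall i, Hom X (E i)), is_limit_cone E X p ->
      forall i0 : L, is_least i0 -> epi (p i0).

(* Main.v *)
Require Import Defs.
From Stdlib Require Import ClassicalEpsilon FunctionalExtensionality ProofIrrelevance Classical.
Set Implicit Arguments.

Lemma epi_of_comp (C : Category) (X Y Z : C) (f : Hom X Y) (g : Hom Y Z) :
  epi (g \o f) -> epi g.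
Proof.
  intros H W u v E. apply H. rewrite !comp_assoc, E. reflexivity.
Qed.

Lemma pullback_epi (C : Category) :
  has_terminal C -> has_pullbacks C -> locally_cartesian_closed C ->
  forall (A B W P : C) (q : Hom A B) (s : Hom W B) (pA : Hom P A) (pW : Hom P W),
    epi q -> is_pullback q s pA pW -> epi pW.
Proof.
  intros [T HT] Hpb Hlcc A B W P q s pA pW Hq HP Z u v Huv.
  destruct (Hpb W Z T (proj1_sig (constructive_indefinite_description _ (HT W)))
                      (proj1_sig (constructive_indefinite_description _ (HT Z))))
    as [Pr [pr1 [pr2 [HPr1 HPr2]]]].
  set (tW := proj1_sig (constructive_indefinite_description _ (HT W))) in *.
  set (tZ := proj1_sig (constructive_indefinite_description _ (HT Z))) in *.
  assert (Hsec : forall w : Hom W Z, exists sg : Hom W Pr, pr1 \o sg = cid W /\ pr2 \o sg = w).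
  { intros w. destruct (HPr2 W (cid W) w) as [m [[Hm1 Hm2] _]].
    - destruct (HT W) as [t Ht]. rewrite (Ht (tW \o cid W)), (Ht (tZ \o w)). reflexivity.
    - exists m; auto. }
  destruct (Hsec u) as [su [Hsu1 Hsu2]].
  destruct (Hsec v) as [sv [Hsv1 Hsv2]].
  assert (Hsuv : su \o pW = sv \o pW).
  { destruct (HPr2 P pW (u \o pW)) as [m [_ Hmu]].
    - destruct (HT P) as [t Ht]. rewrite (Ht (tW \o pW)), (Ht (tZ \o (u \o pW))). reflexivity.
    - rewrite (Hmu (su \o pW)), (Hmu (sv \o pW)); try reflexivity;
        rewrite comp_assoc; try rewrite Hsu1; try rewrite Hsv1; try rewrite Hsu2; try rewrite Hsv2;
        try apply comp_id_l; auto. }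
  destruct (Hlcc W B s Pr pr1) as [B' [b [PP [q1 [q2 [ev [[HPP1 HPP2] [Hev Huniv]]]]]]]].
  assert (Hid : is_pullback (cid B) s s (cid W)).
  { split. rewrite comp_id_l, comp_id_r. reflexivity.
    intros Q x1 x2 Hx. exists x2. rewrite comp_id_l in Hx. split.
    split; [symmetry; exact Hx | apply comp_id_l].
    intros m' _ Hm'. rewrite comp_id_l in Hm'. exact Hm'. }
  assert (Htrans : forall (w : Hom W Z) (sg : Hom W Pr), pr1 \o sg = cid W ->
     exists k : Hom B B', b \o k = cid B /\
       forall m : Hom W PP, q1 \o m = k \o s -> q2 \o m = cid W -> ev \o m = sg).
  { intros w sg Hsg. destruct (Huniv B (cid B) W s (cid W) sg Hid Hsg) as [k [[Hk1 Hk2] _]].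
    exists k. auto. }
  destruct (Htrans u su Hsu1) as [ku [Hku1 Hku2]].
  destruct (Htrans v sv Hsv1) as [kv [Hkv1 Hkv2]].
  assert (Hfac : forall k : Hom B B', b \o k = cid B ->
     exists m' : Hom W PP, q1 \o m' = k \o s /\ q2 \o m' = cid W).
  { intros k Hk. destruct (HPP2 W (k \o s) (cid W)) as [m' [[H1 H2] _]].
    - rewrite comp_assoc, Hk, comp_id_l, comp_id_r. reflexivity.
    - exists m'; auto. }
  assert (Ha : pr1 \o (su \o pW) = pW) by (rewrite comp_assoc, Hsu1; apply comp_id_l).
  destruct (Huniv A q P pA pW (su \o pW) HP Ha) as [k [_ Hk]].
  assert (Hcomp : forall (kk : Hom B B') (sg : Hom W Pr), b \o kk = cid B ->
      (forall m : Hom W PP, q1 \o m = kk \o s -> q2 \o m = cid W -> ev \o m = sg) ->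
      sg \o pW = su \o pW -> kk \o q = k).
  { intros kk sg Hkk Hsg Hsgeq. apply Hk.
    - rewrite comp_assoc, Hkk. apply comp_id_l.
    - intros m Hm1 Hm2. destruct (Hfac kk Hkk) as [m' [Hm'1 Hm'2]].
      destruct (HPP2 P (kk \o q \o pA) pW) as [mm [_ Hmm]].
      + rewrite !comp_assoc, Hkk, comp_id_l. destruct HP as [HP1 _]. exact HP1.
      + assert (E1 : m = mm) by (apply Hmm; assumption).
        assert (E2 : m' \o pW = mm).
        { apply Hmm.
          - rewrite comp_assoc, Hm'1. destruct HP as [HP1 _].
            rewrite <- !comp_assoc, HP1. reflexivity.
          - rewrite comp_assoc, Hm'2. apply comp_id_l. }
        rewrite E1, <- E2, comp_assoc, (Hsg m' Hm'1 Hm'2). exact Hsgeq. }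
  assert (Ek : ku = kv).
  { apply Hq. rewrite (Hcomp ku su Hku1 Hku2 eq_refl).
    rewrite (Hcomp kv sv Hkv1 Hkv2 (eq_sym Hsuv)). reflexivity. }
  destruct (Hfac ku Hku1) as [m' [Hm'1 Hm'2]].
  assert (Es : su = sv).
  { rewrite <- (Hku2 m' Hm'1 Hm'2). apply Hkv2; [rewrite <- Ek; exact Hm'1 | exact Hm'2]. }
  rewrite <- Hsu2, <- Hsv2, Es. reflexivity.
Qed.

Lemma wc_lift (C : Category) :
  has_terminal C -> has_pullbacks C -> locally_cartesian_closed C ->
  forall W : C, weakly_contractible W ->
  forall (A B : C) (q : Hom A B), epi q -> forall s : Hom W B,
    exists x : Hom W A, q \o x = s.
Proof.
  intros Ht Hpb Hl W HW A B q Hq s.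
  destruct (Hpb A W B q s) as [P [pA [pW HP]]].
  destruct (HW P pW (pullback_epi Ht Hpb Hl Hq HP)) as [t Ht'].
  exists (pA \o t). rewrite comp_assoc. destruct HP as [HP1 _]. rewrite HP1.
  rewrite <- comp_assoc, Ht'. apply comp_id_r.
Qed.

Unset Implicit Arguments.
Definition Good {C : Category} {L : Ordinal} (E : diagram C L) (W : C) (i : L)
  (rec : forall j, olt j i -> option (Hom W (E j))) (x : Hom W (E i)) : Prop :=
  (is_least i -> epi x) /\
  forall j (h : olt j i), exists y, rec j h = Some y /\ dmap E h \o x = y.

Definition stepF {C : Category} {L : Ordinal} (E : diagram C L) (W : C) (i : L)
  (rec : forall j, olt j i -> option (Hom W (E j))) : option (Hom W (E i)) :=
  match excluded_middle_informative (exists x, Good E W i rec x) with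
  | left H => Some (proj1_sig (constructive_indefinite_description _ H))
  | right _ => None
  end.

Definition sfix {C : Category} {L : Ordinal} (E : diagram C L) (W : C) :=
  Fix (@olt_wf L) (fun i => option (Hom W (E i))) (stepF E W).

Lemma sfix_eq {C : Category} {L : Ordinal} (E : diagram C L) (W : C) (i : L) :
  sfix E W i = stepF E W i (fun j _ => sfix E W j).
Proof.
  unfold sfix. apply (Fix_eq (@olt_wf L) (fun i => option (Hom W (E i))) (stepF E W)). intros x f g Hfg.
  assert (f = g) by (apply functional_extensionality_dep; intro y;
                     apply functional_extensionality_dep; intro; apply Hfg).
  subst. reflexivity.
Qed.

Lemma sfix_good {C : Category} {L : Ordinal} (E : diagram C L) (W : C) (i : L) :
  (exists x, Good E W i (fun j _ => sfix E W j) x) ->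
  exists x, sfix E W i = Some x /\ Good E W i (fun j _ => sfix E W j) x.
Proof.
  intros H. rewrite sfix_eq. unfold stepF.
  destruct (excluded_middle_informative _) as [H'|H'].
  - exists (proj1_sig (constructive_indefinite_description _ H')). split; [reflexivity|].
    exact (proj2_sig (constructive_indefinite_description _ H')).
  - contradiction.
Qed.

Theorem proposition3p4 (C : Category) :
  topos C -> enough_weakly_contractible C -> transfinite C.
Proof.
  intros [[Ht [Hpb [Hl _]]] _] Hewc L E Htow Hsucc X p Hlim i0 Hi0.
  destruct (Hewc (E i0)) as [W [e [He HW]]].
  assert (Key : forall i, exists x, sfix E W i = Some x /\ Good E W i (fun j _ => sfix E W j) x).
  { intro i. induction i as [i IH] using (well_founded_ind (@olt_wf L)).
    apply sfix_good.
    destruct (classic (is_least i)) as [Hl0|Hnl].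
    - assert (i = i0).
      { destruct (olt_total i i0) as [h|[h|h]]; [destruct (Hi0 _ h)|exact h|destruct (Hl0 _ h)]. }
      subst i. exists e. split; [intros; exact He|]. intros j h. destruct (Hl0 _ h).
    - destruct (classic (exists k, is_succ k i)) as [[k [hki Hk]]|Hns].
      + destruct (IH k hki) as [xk [Hxk [_ Gk]]].
        destruct (wc_lift Ht Hpb Hl HW (Hsucc k i hki (conj hki Hk)) xk) as [x Hx].
        exists x. split; [intros Hl1; destruct (Hl1 _ hki)|].
        intros j h. destruct (olt_total j k) as [hjk|[hjk|hjk]].
        * destruct (Gk j hjk) as [y [Hy1 Hy2]]. exists y. split; [exact Hy1|].
          rewrite <- (dmap_comp E hki hjk h), <- comp_assoc, Hx. exact Hy2.
        * subst j. exists xk. split; [exact Hxk|].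
          rewrite (proof_irrelevance _ h hki). exact Hx.
        * destruct (Hk j hjk h).
      + assert (Hlimi : is_limit i).
        { split; [exact Hnl|]. intros k Hk. apply Hns. exists k. exact Hk. }
        set (q := fun j (h : olt j i) => proj1_sig (constructive_indefinite_description _ (IH j h))).
        assert (Hq : forall j h, sfix E W j = Some (q j h) /\ Good E W j (fun l _ => sfix E W l) (q j h))
          by (intros j h; exact (proj2_sig (constructive_indefinite_description _ (IH j h)))).
        destruct (Htow i Hlimi) as [_ Hu].
        destruct (Hu W q) as [x [Hx _]].
        { intros j l hj hl hlj. destruct (Hq j hj) as [_ [_ Gj]].
          destruct (Gj l hlj) as [y [Hy1 Hy2]]. rewrite Hy2.
          destruct (Hq l hl) as [Hql _]. rewrite Hy1 in Hql. injection Hql. auto. }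
        exists x. split; [intro H; destruct Hnl; exact H|].
        intros j h. exists (q j h). split; [exact (proj1 (Hq j h))|]. apply Hx. }
  set (r := fun i => proj1_sig (constructive_indefinite_description _ (Key i))).
  assert (Hr : forall i, sfix E W i = Some (r i) /\ Good E W i (fun j _ => sfix E W j) (r i))
    by (intro i; exact (proj2_sig (constructive_indefinite_description _ (Key i)))).
  destruct Hlim as [_ Hu].
  destruct (Hu W r) as [u [Hu1 _]].
  { intros i j hji. destruct (Hr i) as [_ [_ Gi]]. destruct (Gi j hji) as [y [Hy1 Hy2]].
    rewrite Hy2. destruct (Hr j) as [Hj _]. rewrite Hy1 in Hj. injection Hj. auto. }
  apply (@epi_of_comp C W X (E i0) u (p i0)).
  rewrite Hu1. destruct (Hr i0) as [_ [G _]]. exact (G Hi0).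
Qed.
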